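(* Let $a,b$ be distinct assertion variables. The implication $$(-*a*b)\wedge(a*a)\ \Rightarrow\ (-*a*a)\vee(-*-*b)$$ holds in the unary interpretation (for every $\eta$ and every $\rho:\mathsf{AVar}\to\mathsf{IRel}_1$), but fails in the binary interpretation: with $\rho(a)=\{([1],[])\}^\uparrow\cup\{([2],[2])\}^\uparrow$ and $\rho(b)=\mathsf{Heap}^2$, the pair $([1,2],[2])$ belongs to the binary meaning of the left side but not to that of the right side.
   Context: $\mathsf{Heap}$: finite partial functions $\mathsf{PosInt}\to\mathsf{Int}$; $[]$ the empty heap; $[m]$ the heap storing $0$ at location $m$ and nothing else, and $[m_1,m_2]=[m_1]\cdot[m_2]$ for distinct $m_1,m_2$; $g\sqsubseteq h$ means $h$ extends $g$; $h\cdot g$ union of disjoint heaps; componentwise on $\mathsf{Heap}^n$; $S^\uparrow$ is the upward closure of a set $S$ of tuples. $\mathsf{IRel}_n$: upward closed subsets of $\mathsf{Heap}^n$; $p*q=\{\mathbf f\cdot\mathbf g\mid\mathbf f\in p,\mathbf g\in q,\text{componentwise disjoint}\}$; $\Delta_n(X)=\{(h_1,\dots,h_n)\mid\exists f\in X.\ \forall k.\ f\sqsubseteq h_k\}$ for $X\subseteq\mathsf{Heap}$. Assertion semantics with $\eta$ and $\rho:\mathsf{AVar}\to\mathsf{IRel}_n$: primitive assertions mean $\Delta_n$ of their standard set of heaps, variables $a$ mean $\rho(a)$, $\wedge,\vee,*$ mean $\cap,\cup,*$, $\exists$ means union over integer values. The assertion $-$ abbreviates $\exists x,y.\,x\hookrightarrow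 y$, whose standard set of heaps is the set of heaps with non-empty domain. Binary: $n=2$; unary: $n=1$. *)

(* Defs.v *)
From mathcomp Require Import all_boot.
From Stdlib Require Import ZArith PArith List.
Set Implicit Arguments. Unset Strict Implicit. Unset Printing Implicit Defensive.

(** Heaps: finite partial functions PosInt -> Int. *)
Definition heap : Type :=
  {h : positive -> option Z | exists l : list positive, forall p, h p <> None -> List.In p l}.
Definition hfun (h : heap) : positive -> option Z := proj1_sig h.

Definition hsub (g h : heap) : Prop :=
  forall p v, hfun g p = Some v -> hfun h p = Some v.
Definition hdisj (g h : heap) : Prop :=
  forall p, hfun g p = None \/ hfun h p = None.
Definition hunion_is (h f g : heap) : Prop :=
  forall p, hfun h p = match hfun f p with Some v => Some v | None => hfun g p end.

Definition htuple (n : nat) : Type := 'I_n -> heap.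

(** upward closed subsets of Heap^n (elements of IRel_n) *)
Definition upclosed (n : nat) (S : htuple n -> Prop) : Prop :=
  forall f h : htuple n, S f -> (forall k, hsub (f k) (h k)) -> S h.

Definition Delta (n : nat) (X : heap -> Prop) : htuple n -> Prop :=
  fun h => exists f, X f /\ forall k, hsub f (h k).

Definition sstar (n : nat) (p q : htuple n -> Prop) : htuple n -> Prop :=
  fun h => exists f g, p f /\ q g /\
    forall k, hdisj (f k) (g k) /\ hunion_is (h k) (f k) (g k).

Definition sand (n : nat) (p q : htuple n -> Prop) : htuple n -> Prop :=
  fun h => p h /\ q h.
Definition sor (n : nat) (p q : htuple n -> Prop) : htuple n -> Prop :=
  fun h => p h \/ q h.

Definition pointsto_std (x y : Z) : heap -> Prop :=
  fun h => exists p : positive, x = Zpos p /\ hfun h p = Some y.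

(** the assertion  −  :=  ∃x,y. x ↪ y  *)
Definition dash (n : nat) : htuple n -> Prop :=
  fun h => exists x y : Z, @Delta n (pointsto_std x y) h.

(** LHS and RHS of the implication, interpreted with ρ(a)=A, ρ(b)=B *)
Definition lhs17 (n : nat) (A B : htuple n -> Prop) : htuple n -> Prop :=
  sand (sstar (sstar (@dash n) A) B) (sstar A A).
Definition rhs17 (n : nat) (A B : htuple n -> Prop) : htuple n -> Prop :=
  sor (sstar (sstar (@dash n) A) A) (sstar (sstar (@dash n) (@dash n)) B).

Lemma hcell_fin (m : positive) : exists l : list positive,
  forall p, (if Pos.eqb p m then Some 0%Z else None) <> None -> List.In p l.
Proof.
  exists (m :: nil) => p; case E: (Pos.eqb p m) => // _.
  by move/Pos.eqb_eq: E => ->; left.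
Qed.
Definition hcell (m : positive) : heap :=
  exist _ (fun p => if Pos.eqb p m then Some 0%Z else None) (hcell_fin m).

Lemma hcell2_fin (m1 m2 : positive) : exists l : list positive,
  forall p, (if Pos.eqb p m1 then Some 0%Z else if Pos.eqb p m2 then Some 0%Z else None)
              <> None -> List.In p l.
Proof.
  exists (m1 :: m2 :: nil) => p.
  case E1: (Pos.eqb p m1); first by move/Pos.eqb_eq: E1 => -> _; left.
  case E2: (Pos.eqb p m2) => // _; by move/Pos.eqb_eq: E2 => ->; right; left.
Qed.
Definition hcell2 (m1 m2 : positive) : heap :=
  exist _ (fun p => if Pos.eqb p m1 then Some 0%Z else if Pos.eqb p m2 then Some 0%Z else None)
        (hcell2_fin m1 m2).

Lemma hemp_fin : exists l : list positive,
  forall p, (fun _ : positive => @None Z) p <> None -> List.In p l.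
Proof. by exists nil. Qed.
Definition hemp : heap := exist _ (fun _ => None) hemp_fin.

Definition pair2 (h1 h2 : heap) : htuple 2 :=
  fun k => if nat_of_ord k == 0 then h1 else h2.

Definition upset1 (n : nat) (t : htuple n) : htuple n -> Prop :=
  fun h => forall k, hsub (t k) (h k).

Definition rhoA2 : htuple 2 -> Prop :=
  fun h => upset1 (pair2 (hcell 1) hemp) h \/ upset1 (pair2 (hcell 2) (hcell 2)) h.
Definition rhoB2 : htuple 2 -> Prop := fun _ => True.

(* Main.v *)
Require Import Defs.
From mathcomp Require Import all_boot.
From Stdlib Require Import ZArith PArith List Classical.

Lemma union_sub (h f g : heap) : hdisj f g -> hunion_is h f g -> hsub f h /\ hsub g h.
Proof.
  move=> Hd Hu; split=> p v H; rewrite Hu.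
  - by rewrite H.
  - by case: (Hd p) => H'; [rewrite H' | rewrite H in H'].
Qed.

Lemma star3 n (X Y Z : htuple n -> Prop) h : sstar (sstar X Y) Z h ->
  exists x y z, X x /\ Y y /\ Z z /\ forall k,
    hsub (x k) (h k) /\ hsub (y k) (h k) /\ hsub (z k) (h k) /\
    hdisj (x k) (y k) /\ hdisj (x k) (z k) /\ hdisj (y k) (z k).
Proof.
  move=> [f [g [[x [y [Hx [Hy Hxy]]]] [Hz Hfg]]]].
  exists x, y, g; split; first done; split; first done; split; first done; move=> k.
  case: (Hxy k) => D1 U1; case: (Hfg k) => D2 U2.
  case: (@union_sub _ _ _ D1 U1) => S1 S2; case: (@union_sub _ _ _ D2 U2) => S3 S4.
  split; first by move=> p v H; apply: S3; apply: S1.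
  split; first by move=> p v H; apply: S3; apply: S2.
  split=> //; split=> //.
  split=> p.
  - case E: (hfun (x k) p) => [v|]; last by left.
    right; case: (D2 p) => // H; by rewrite (S1 _ _ E) in H.
  - case E: (hfun (y k) p) => [v|]; last by left.
    right; case: (D2 p) => // H; by rewrite (S2 _ _ E) in H.
Qed.

Definition k0 : 'I_2 := @Ordinal 2 0 erefl.
Definition k1 : 'I_2 := @Ordinal 2 1 erefl.

Lemma ord2 (k : 'I_2) : k = k0 \/ k = k1.
Proof.
  case: k => [[|[|m]] Hm].
  - by left; apply: val_inj.
  - by right; apply: val_inj.
  - by [].
Qed.

Definition H0 := pair2 (hcell2 1 2) (hcell 2).

Lemma dash_k1 (d : htuple 2) : dash d -> hsub (d k1) (H0 k1) -> hfun (d k1) 2%positive <> None.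
Proof.
  move=> [x [y [f [[p [_ Hf]] Hs]]]] Hsub.
  have H1 := Hs k1 p y Hf.
  have H2 := Hsub _ _ H1.
  rewrite /H0 /pair2 /= in H2.
  destruct p as [[]|[]|] => //; by rewrite H1.
Qed.

Lemma A_k (a : htuple 2) : rhoA2 a ->
  hfun (a k0) 1%positive <> None \/ hfun (a k1) 2%positive <> None.
Proof.
  case=> H.
  - left; by rewrite (H k0 1%positive 0%Z erefl).
  - right; by rewrite (H k1 2%positive 0%Z erefl).
Qed.

Ltac pcase p := destruct p as [[]|[]|]; simpl; auto.

Theorem mainTheorem17 :
  (forall A B : htuple 1 -> Prop, upclosed A -> upclosed B ->
     forall h : htuple 1, lhs17 A B h -> rhs17 A B h)
  /\
  (upclosed rhoA2 /\ upclosed rhoB2 /\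
   lhs17 rhoA2 rhoB2 (pair2 (hcell2 1 2) (hcell 2)) /\
   ~ rhs17 rhoA2 rhoB2 (pair2 (hcell2 1 2) (hcell 2))).
Proof.
  split.
  { move=> A B uA uB h [[f [g [[d [a1 [Hd [Ha1 Hda]]]] [Hg Hfg]]]] _].
    case: (classic (exists p, hfun (a1 ord0) p <> None)) => [[p Hp]|Hn].
    - right; exists f, g; split; last by split.
      exists d, a1; split=> //; split=> //.
      case E: (hfun (a1 ord0) p) Hp => [v|] // _.
      exists (Zpos p), v, (a1 ord0); split; first by exists p.
      by move=> k; rewrite (ord1 k) => q w.
    - left; exists f, g; split; first by exists d, a1.
      split=> //; apply: (uA a1) => // k p v; rewrite (ord1 k) => E.
      by exfalso; apply: Hn; exists p; rewrite E. }
  split.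
  { move=> f h [] Hf Hs; [left|right] => k p v E; apply: Hs; exact: Hf. }
  split; first by [].
  split.
  { split.
    - exists (pair2 (hcell2 1 2) (hcell 2)), (pair2 hemp hemp); split.
      + exists (pair2 (hcell 2) (hcell 2)), (pair2 (hcell 1) hemp); split.
        * exists 2%Z, 0%Z, (hcell 2); split; first by exists 2%positive.
          move=> k; case: (ord2 k) => -> p v //.
        * split; first by left => k p v.
          move=> k; case: (ord2 k) => ->; split=> p; pcase p.
      + split=> // k; case: (ord2 k) => ->; split=> p; pcase p.
    - exists (pair2 (hcell 1) hemp), (pair2 (hcell 2) (hcell 2)); split.
      + by left => k p v.
      + split; first by right => k p v.
        move=> k; case: (ord2 k) => ->; split=> p; pcase p. }
  move=> [].
  - move/star3 => [d [a [a' [Hd [Ha [Ha' Hk]]]]]].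
    case: (Hk k1) => Sd [Sa [Sa' [Dda [Dda' _]]]].
    have Hd2 := @dash_k1 _ Hd Sd.
    have F : forall b, rhoA2 b -> hdisj (d k1) (b k1) -> hfun (b k0) 1%positive <> None.
      move=> b Hb Db; case: (@A_k _ Hb) => // Hb2; exfalso.
      by case: (Db 2%positive).
    have X1 := F a Ha Dda; have X2 := F a' Ha' Dda'.
    case: (Hk k0) => _ [_ [_ [_ [_ D]]]].
    by case: (D 1%positive).
  - move/star3 => [d [d' [b [Hd [Hd' [_ Hk]]]]]].
    case: (Hk k1) => Sd [Sd' [_ [D _]]].
    have X1 := @dash_k1 _ Hd Sd; have X2 := @dash_k1 _ Hd' Sd'.
    by case: (D 2%positive).
Qed.
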